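(* Let $b,c\mid n$. For $\underline m\in\mathbb Z^{(b,c)}$ and $w\in\mathbb Z$, the chain map $[\underline m,w]:S^{\lambda_b}\to S^{\lambda_c}$ is chain homotopic to zero if and only if $\sum_im_i+(b,c)w=0$. Consequently, the rule sending the class of $[\underline m,w]$ to $\sum_im_i+(b,c)w$ is a well-defined isomorphism $[S^{\lambda_b},S^{\lambda_c}]\to\mathbb Z$.
   Context: $n$ is a fixed odd positive integer, $C_n$ cyclic of order $n$ with generator $t$; for $d\mid n$, $\Theta_d=C_n/\langle t^d\rangle$, $p$ denotes canonical projections $\Theta_d\to\Theta_e$ ($e\mid d$), $\pi_d:\Theta_d\to\Theta_1$ the projection to a point, and $t$ the action of the generator. $\underline{\mathbb Z}$ is the constant Mackey functor for $C_n$ with value $\mathbb Z$, $\underline{\mathbb Z}$-modules are modules over it, with restriction $f^*$ and transfer $f_*$. $F_d$ is the free $\underline{\mathbb Z}$-module on $g_d\in F_d(\Theta_d)$ ($F_1=\underline{\mathbb Z}$); for $f:\Theta_d\to\Theta_e$, $Rf:F_d\to F_e$ sends $g_d\mapsto f^*(g_e)$ and $If:F_e\to F_d$ sends $g_e\mapsto f_*(g_d)$. For $b\mid n$, $S^{\lambda_b}$ is the chain complex $F_b\xrightarrow{\mathrm{id}-Rt}F_b\xrightarrow{R\pi_b}\underline{\mathbb Z}$ in homological degrees $2,1,0$; $[X,Y]$ denotes morphisms in the derived category of $\underline{\mathbb Z}$-modules (for these bounded free complexes, chain homotopy classes of chain maps). Let $(b,c)$, $[b,c]$ be gcd and lcm.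 For $\underline m=(m_0,\dots,m_{(b,c)-1})\in\mathbb Z^{(b,c)}$, $\langle\underline m\rangle:F_b\to F_c$ is the map $g_b\mapsto\sum_im_i(t_* )^ip_*p^*(g_c)$, where $p^*$ is restriction along $\Theta_{[b,c]}\to\Theta_c$ and $p_*$ transfer along $\Theta_{[b,c]}\to\Theta_b$ (every map $F_b\to F_c$ is uniquely of this form). $I\pi R\pi:F_b\to F_c$ is $I\pi_c\circ R\pi_b$. For $w\in\mathbb Z$, $[\underline m,w]:S^{\lambda_b}\to S^{\lambda_c}$ is the chain map equal to $\langle\underline m\rangle+w\,I\pi R\pi$ in degree 2, $\langle\underline m\rangle$ in degree 1, and multiplication by $\frac{c}{(b,c)}\sum_im_i$ in degree 0; every chain map $S^{\lambda_b}\to S^{\lambda_c}$ has this form. *)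

(* Defs.v *)
(* Z-modules (= modules over the constant Mackey functor Z
   for C_n = cohomological Mackey functors for C_n), described on the orbits
   Theta_d = C_n/<t^d> (d | n). *)
From mathcomp Require Import all_boot all_order all_algebra.
Set Implicit Arguments. Unset Strict Implicit. Unset Printing Implicit Defensive.
Import Order.TTheory GRing.Theory Num.Theory.
Local Open Scope ring_scope.

(* Data of a Mackey functor on the orbits Theta_d:
   M d      = M(Theta_d)
   res d e  = p^*  : M(Theta_e) -> M(Theta_d)   for p : Theta_d -> Theta_e (e | d)
   tr d e   = p_*  : M(Theta_d) -> M(Theta_e)
   cov d    = t_*  : M(Theta_d) -> M(Theta_d)   (t = action of the generator)
   con d    = t^*  : M(Theta_d) -> M(Theta_d) *)
Record mackey := Mackey {
  mval :> nat -> zmodType;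
  res : forall d e : nat, mval e -> mval d;
  tr  : forall d e : nat, mval d -> mval e;
  cov : forall d : nat, mval d -> mval d;
  con : forall d : nat, mval d -> mval d }.
Arguments res : clear implicits.
Arguments tr : clear implicits.
Arguments cov : clear implicits.
Arguments con : clear implicits.

(* Axioms of a Mackey functor for C_n (on the orbit category, whose maps are
   generated by the projections p and the action t), plus the cohomological
   condition p_* p^* = multiplication by the index, which characterizes
   modules over the constant Mackey functor Z. *)
Definition is_Zmodule (n : nat) (M : mackey) : Prop :=
  [/\ (forall d e, (e %| d)%N -> (d %| n)%N ->
         {morph res M d e : x y / x - y} /\ {morph tr M d e : x y / x - y}),
      (forall d, (d %| n)%N ->
         [/\ {morph cov M d : x y / x - y}, {morph con M d : x y / x - y},
             res M d d =1 id & tr M d d =1 id]),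
      (forall d e f, (f %| e)%N -> (e %| d)%N -> (d %| n)%N ->
         (forall x, res M d e (res M e f x) = res M d f x) /\
         (forall x, tr M e f (tr M d e x) = tr M d f x)),
      (forall d, (d %| n)%N ->
         [/\ (forall x, cov M d (con M d x) = x),
             (forall x, con M d (cov M d x) = x) &
             (forall x, iter d (cov M d) x = x)]) &
      (forall d e, (e %| d)%N -> (d %| n)%N ->
         (forall x, tr M d e (cov M d x) = cov M e (tr M d e x)) /\
         (forall x, res M d e (con M e x) = con M d (res M d e x)))] /\
  [/\ (* Mackey double coset formula for Theta_d -> Theta_e <- Theta_d' *)
      (forall d d' e, (e %| d)%N -> (e %| d')%N -> (d %| n)%N -> (d' %| n)%N ->
         forall x, res M d' e (tr M d e x) =
           \sum_(j < (gcdn d d' %/ e)%N)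
              tr M (lcmn d d') d'
                 (iter (j * e) (cov M (lcmn d d')) (res M (lcmn d d') d x))) &
      (forall d e, (e %| d)%N -> (d %| n)%N ->
         forall x, tr M d e (res M d e x) = x *+ (d %/ e))].

Definition Zconst : mackey :=
  @Mackey (fun _ => int : zmodType)
    (fun d e (x : int) => x)
    (fun d e (x : int) => x *+ (d %/ e))
    (fun d (x : int) => x)
    (fun d (x : int) => x).

Definition is_mor (n : nat) (M N : mackey) (phi : forall d, M d -> N d) : Prop :=
  (forall d, (d %| n)%N ->
     {morph phi d : x y / x - y} /\
     (forall x, phi d (cov M d x) = cov N d (phi d x))) /\
  (forall d e, (e %| d)%N -> (d %| n)%N ->
     (forall x, phi d (res M d e x) = res N d e (phi e x)) /\
     (forall x, phi e (tr M d e x) = tr N d e (phi d x))).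

Arguments is_mor : clear implicits.

Definition meq (n : nat) (M N : mackey) (phi psi : forall d, M d -> N d) : Prop :=
  forall d, (d %| n)%N -> forall x, phi d x = psi d x.

Definition mcomp (M N P : mackey) (psi : forall d, N d -> P d)
  (phi : forall d, M d -> N d) : forall d, M d -> P d :=
  fun d x => psi d (phi d x).
Definition madd (M N : mackey) (phi psi : forall d, M d -> N d) :
  forall d, M d -> N d := fun d x => phi d x + psi d x.
Definition msub (M N : mackey) (phi psi : forall d, M d -> N d) :
  forall d, M d -> N d := fun d x => phi d x - psi d x.
Definition mscale (M N : mackey) (w : int) (phi : forall d, M d -> N d) :
  forall d, M d -> N d := fun d x => phi d x *~ w.

Definition is_free (n : nat) (F : mackey) (d : nat) (g : F d) : Prop :=
  is_Zmodule n F /\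
  forall M : mackey, is_Zmodule n M -> forall x : M d,
    exists phi : forall e, F e -> M e,
      [/\ is_mor n F M phi, phi d g = x &
          forall psi : forall e, F e -> M e,
            is_mor n F M psi -> psi d g = x -> meq n psi phi].

(* The differentials of S^{lambda_b} = (F_b --id-Rt--> F_b --R pi_b--> Z):
   D = id - Rt : g_b |-> g_b - t^*(g_b),   E = R pi_b : g_b |-> pi_b^*(g_1), g_1 = 1. *)
Definition sphere_diffs (n : nat) (F : mackey) (b : nat) (g : F b)
  (D : forall d, F d -> F d) (E : forall d, F d -> Zconst d) : Prop :=
  [/\ is_mor n F F D, D b g = g - con F b g,
      is_mor n F Zconst E & E b g = res Zconst b 1 (1%R : int)].

Definition is_Ipi (n : nat) (F : mackey) (c : nat) (g : F c)
  (I : forall d, Zconst d -> F d) : Prop :=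
  is_mor n Zconst F I /\ I 1%N (1%R : int) = tr F c 1 g.

(* <m> : F_b -> F_c, g_b |-> sum_i m_i (t_* )^i p_* p^* (g_c),
   p^* along Theta_[b,c] -> Theta_c and p_* along Theta_[b,c] -> Theta_b. *)
Definition is_angle (n : nat) (Fb : mackey) (b : nat) (gb : Fb b)
  (Fc : mackey) (c : nat) (gc : Fc c) (m : 'I_(gcdn b c) -> int)
  (B : forall d, Fb d -> Fc d) : Prop :=
  is_mor n Fb Fc B /\
  B b gb = \sum_(i < gcdn b c)
             iter i (cov Fc b) (tr Fc (lcmn b c) b (res Fc (lcmn b c) c gc)) *~ m i.

Definition is_chain_map (n : nat) (Fb Fc : mackey)
  (Db : forall d, Fb d -> Fb d) (Eb : forall d, Fb d -> Zconst d)
  (Dc : forall d, Fc d -> Fc d) (Ec : forall d, Fc d -> Zconst d)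
  (f2 f1 : forall d, Fb d -> Fc d) (f0 : forall d, Zconst d -> Zconst d) : Prop :=
  [/\ is_mor n Fb Fc f2, is_mor n Fb Fc f1, is_mor n Zconst Zconst f0,
      meq n (mcomp Dc f2) (mcomp f1 Db) & meq n (mcomp Ec f1) (mcomp f0 Eb)].

Definition null_homotopic (n : nat) (Fb Fc : mackey)
  (Db : forall d, Fb d -> Fb d) (Eb : forall d, Fb d -> Zconst d)
  (Dc : forall d, Fc d -> Fc d) (Ec : forall d, Fc d -> Zconst d)
  (f2 f1 : forall d, Fb d -> Fc d) (f0 : forall d, Zconst d -> Zconst d) : Prop :=
  exists (h1 : forall d, Fb d -> Fc d) (h0 : forall d, Zconst d -> Fc d),
    [/\ is_mor n Fb Fc h1, is_mor n Zconst Fc h0,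
        meq n f2 (mcomp h1 Db),
        meq n f1 (madd (mcomp Dc h1) (mcomp h0 Eb)) &
        meq n f0 (mcomp Ec h0)].

Definition homotopic (n : nat) (Fb Fc : mackey)
  (Db : forall d, Fb d -> Fb d) (Eb : forall d, Fb d -> Zconst d)
  (Dc : forall d, Fc d -> Fc d) (Ec : forall d, Fc d -> Zconst d)
  (f2 f1 : forall d, Fb d -> Fc d) (f0 : forall d, Zconst d -> Zconst d)
  (f2' f1' : forall d, Fb d -> Fc d) (f0' : forall d, Zconst d -> Zconst d) : Prop :=
  null_homotopic n Db Eb Dc Ec (msub f2 f2') (msub f1 f1') (msub f0 f0').

Definition deg0_map (b c : nat) (m : 'I_(gcdn b c) -> int) :
  forall d, Zconst d -> Zconst d :=
  fun d (k : Zconst d) => k *~ ((c %/ gcdn b c)%:Z * \sum_(i < gcdn b c) m i).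

(* The chain map [m, w] given <m> = B and I pi_c = I, R pi_b = Eb. *)
Definition bracket2 (Fb Fc : mackey) (B : forall d, Fb d -> Fc d)
  (I : forall d, Zconst d -> Fc d) (Eb : forall d, Fb d -> Zconst d) (w : int) :
  forall d, Fb d -> Fc d := madd B (mscale w (mcomp I Eb)).

(* Main.v *)
From HB Require Import structures.
Require Import Defs.
From mathcomp Require Import all_boot all_order all_algebra.
From mathcomp Require Import zify.
From Stdlib Require Import ClassicalEpsilon.
Set Implicit Arguments. Unset Strict Implicit. Unset Printing Implicit Defensive.
Import Order.TTheory GRing.Theory Num.Theory.
Local Open Scope ring_scope.

Section Additive.
Variables (U V : zmodType) (f : U -> V).
Hypothesis fB : {morph f : x y / x - y}.

Lemma af0 : f 0 = 0.
Proof. by rewrite -(subrr 0) fB subrr. Qed.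
Lemma afN x : f (- x) = - f x.
Proof. by have := fB 0 x; rewrite af0 !sub0r. Qed.
Lemma afD x y : f (x + y) = f x + f y.
Proof. by have := fB x (- y); rewrite opprK afN opprK. Qed.
Lemma afsum (I : Type) (r : seq I) (P : pred I) (F : I -> U) :
  f (\sum_(i <- r | P i) F i) = \sum_(i <- r | P i) f (F i).
Proof.
elim: r => [|a r IH]; first by rewrite !big_nil af0.
by rewrite !big_cons; case: (P a); rewrite ?afD IH.
Qed.
Lemma afMn x k : f (x *+ k) = f x *+ k.
Proof. by elim: k => [|k IH]; rewrite ?mulr0n ?af0 // !mulrS afD IH. Qed.
Lemma afMz x (k : int) : f (x *~ k) = f x *~ k.
Proof.
case: k => k; first exact: afMn.
by rewrite !NegzE !mulrNz afN; congr (- _); apply: afMn.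
Qed.
End Additive.

Lemma iter_id_fix (T : Type) (h : T -> T) k x : (forall y, h y = y) -> iter k h x = x.
Proof. by move=> H; elim: k => //= k ->. Qed.

Lemma iter_comm (T U : Type) (h : T -> T) (h' : U -> U) (f : T -> U) k x :
  (forall y, f (h y) = h' (f y)) -> f (iter k h x) = iter k h' (f x).
Proof. by move=> H; elim: k => //= k <-. Qed.

Section Mack.
Variables (n : nat) (M : mackey).
Hypothesis HM : is_Zmodule n M.
Hypothesis n0 : (0 < n)%N.

Lemma dvd_pos d : (d %| n)%N -> (0 < d)%N.
Proof. by move=> dn; apply: dvdn_gt0 n0 dn. Qed.

Lemma m_resB d e : (e %| d)%N -> (d %| n)%N -> {morph res M d e : x y / x - y}.
Proof. by case: HM => [[H _ _ _ _] _] ed dn; case: (H d e ed dn). Qed.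
Lemma m_trB d e : (e %| d)%N -> (d %| n)%N -> {morph tr M d e : x y / x - y}.
Proof. by case: HM => [[H _ _ _ _] _] ed dn; case: (H d e ed dn). Qed.
Lemma m_covB d : (d %| n)%N -> {morph cov M d : x y / x - y}.
Proof. by case: HM => [[_ H _ _ _] _] dn; case: (H d dn). Qed.
Lemma m_conB d : (d %| n)%N -> {morph con M d : x y / x - y}.
Proof. by case: HM => [[_ H _ _ _] _] dn; case: (H d dn). Qed.
Lemma m_resid d x : (d %| n)%N -> res M d d x = x.
Proof. by case: HM => [[_ H _ _ _] _] dn; case: (H d dn). Qed.
Lemma m_trid d x : (d %| n)%N -> tr M d d x = x.
Proof. by case: HM => [[_ H _ _ _] _] dn; case: (H d dn). Qed.
Lemma m_resres d e f x : (f %| e)%N -> (e %| d)%N -> (d %| n)%N ->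
  res M d e (res M e f x) = res M d f x.
Proof. by case: HM => [[_ _ H _ _] _] fe ed dn; case: (H d e f fe ed dn). Qed.
Lemma m_trtr d e f x : (f %| e)%N -> (e %| d)%N -> (d %| n)%N ->
  tr M e f (tr M d e x) = tr M d f x.
Proof. by case: HM => [[_ _ H _ _] _] fe ed dn; case: (H d e f fe ed dn). Qed.
Lemma m_covcon d x : (d %| n)%N -> cov M d (con M d x) = x.
Proof. by case: HM => [[_ _ _ H _] _] dn; case: (H d dn). Qed.
Lemma m_concov d x : (d %| n)%N -> con M d (cov M d x) = x.
Proof. by case: HM => [[_ _ _ H _] _] dn; case: (H d dn). Qed.
Lemma m_covn d x : (d %| n)%N -> iter d (cov M d) x = x.
Proof. by case: HM => [[_ _ _ H _] _] dn; case: (H d dn). Qed.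
Lemma m_trcov d e x : (e %| d)%N -> (d %| n)%N ->
  tr M d e (cov M d x) = cov M e (tr M d e x).
Proof. by case: HM => [[_ _ _ _ H] _] ed dn; case: (H d e ed dn). Qed.
Lemma m_rescon d e x : (e %| d)%N -> (d %| n)%N ->
  res M d e (con M e x) = con M d (res M d e x).
Proof. by case: HM => [[_ _ _ _ H] _] ed dn; case: (H d e ed dn). Qed.
Lemma m_dcf d d' e x : (e %| d)%N -> (e %| d')%N -> (d %| n)%N -> (d' %| n)%N ->
  res M d' e (tr M d e x) =
  \sum_(j < (gcdn d d' %/ e)%N)
     tr M (lcmn d d') d' (iter (j * e) (cov M (lcmn d d')) (res M (lcmn d d') d x)).
Proof. by case: HM => [_ [H _]] ? ? ? ?; apply: H. Qed.
Lemma m_coh d e x : (e %| d)%N -> (d %| n)%N -> tr M d e (res M d e x) = x *+ (d %/ e).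
Proof. by case: HM => [_ [_ H]] ? ?; apply: H. Qed.

Lemma m_rescov d e x : (e %| d)%N -> (d %| n)%N ->
  res M d e (cov M e x) = cov M d (res M d e x).
Proof.
move=> ed dn; have en := dvdn_trans ed dn.
by rewrite -[LHS](m_covcon _ dn) -m_rescon // m_concov.
Qed.
Lemma m_resiter d e k x : (e %| d)%N -> (d %| n)%N ->
  res M d e (iter k (cov M e) x) = iter k (cov M d) (res M d e x).
Proof. by move=> ed dn; apply: iter_comm => y; apply: m_rescov. Qed.
Lemma m_triter d e k x : (e %| d)%N -> (d %| n)%N ->
  tr M d e (iter k (cov M d) x) = iter k (cov M e) (tr M d e x).
Proof. by move=> ed dn; apply: iter_comm => y; apply: m_trcov. Qed.
Lemma m_coniter d x : (d %| n)%N -> con M d x = iter d.-1 (cov M d) x.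
Proof.
move=> dn; rewrite -{1}(m_covn x dn).
have -> : iter d (cov M d) x = cov M d (iter d.-1 (cov M d) x).
  by rewrite -iterS prednK // dvd_pos.
by rewrite m_concov.
Qed.
Lemma m_itermod d k x : (d %| n)%N -> iter k (cov M d) x = iter (k %% d) (cov M d) x.
Proof.
move=> dn; rewrite {1}(divn_eq k d) iterD.
by elim: (k %/ d)%N => // q IH; rewrite mulSn iterD IH m_covn.
Qed.
End Mack.

Section Mor.
Variables (n : nat) (M N P : mackey).

Lemma mor_B phi d : is_mor n M N phi -> (d %| n)%N -> {morph phi d : x y / x - y}.
Proof. by case=> H _ dn; case: (H d dn). Qed.
Lemma mor_cov phi d x : is_mor n M N phi -> (d %| n)%N -> phi d (cov M d x) = cov N d (phi d x).
Proof. by case=> H _ dn; case: (H d dn). Qed.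
Lemma mor_res phi d e x : is_mor n M N phi -> (e %| d)%N -> (d %| n)%N ->
  phi d (res M d e x) = res N d e (phi e x).
Proof. by case=> _ H ed dn; case: (H d e ed dn). Qed.
Lemma mor_tr phi d e x : is_mor n M N phi -> (e %| d)%N -> (d %| n)%N ->
  phi e (tr M d e x) = tr N d e (phi d x).
Proof. by case=> _ H ed dn; case: (H d e ed dn). Qed.
Lemma mor_iter phi d k x : is_mor n M N phi -> (d %| n)%N ->
  phi d (iter k (cov M d) x) = iter k (cov N d) (phi d x).
Proof. by move=> Hp dn; apply: iter_comm => y; apply: mor_cov. Qed.
Lemma mor_con phi d x : is_Zmodule n M -> is_Zmodule n N -> (0 < n)%N ->
  is_mor n M N phi -> (d %| n)%N -> phi d (con M d x) = con N d (phi d x).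
Proof.
by move=> HM HN n0 Hp dn; rewrite (m_coniter HM n0 _ dn) (m_coniter HN n0 _ dn) mor_iter.
Qed.

End Mor.
Section Mor2.
Variables (n : nat) (M N P : mackey).
Lemma mor_comp phi psi : is_mor n M N phi -> is_mor n N P psi -> is_mor n M P (mcomp psi phi).
Proof.
move=> H1 H2; rewrite /mcomp; split.
  move=> d dn; split; first by move=> x y; rewrite (mor_B H1 dn) (mor_B H2 dn).
  by move=> x; rewrite (mor_cov _ H1 dn) (mor_cov _ H2 dn).
move=> d e ed dn; split=> x.
  by rewrite (mor_res _ H1 ed dn) (mor_res _ H2 ed dn).
by rewrite (mor_tr _ H1 ed dn) (mor_tr _ H2 ed dn).
Qed.

Lemma mor_add phi psi : is_Zmodule n N -> is_mor n M N phi -> is_mor n M N psi ->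
  is_mor n M N (madd phi psi).
Proof.
move=> HN H1 H2; rewrite /madd; split.
  move=> d dn; split.
    by move=> x y; rewrite (mor_B H1 dn) (mor_B H2 dn) opprD addrACA.
  by move=> x; rewrite (mor_cov _ H1 dn) (mor_cov _ H2 dn) (afD (m_covB HN dn)).
move=> d e ed dn; have en := dvdn_trans ed dn; split=> x.
  by rewrite (mor_res _ H1 ed dn) (mor_res _ H2 ed dn) (afD (m_resB HN ed dn)).
by rewrite (mor_tr _ H1 ed dn) (mor_tr _ H2 ed dn) (afD (m_trB HN ed dn)).
Qed.

Lemma mor_sub phi psi : is_Zmodule n N -> is_mor n M N phi -> is_mor n M N psi ->
  is_mor n M N (msub phi psi).
Proof.
move=> HN H1 H2; rewrite /msub; split.
  move=> d dn; split.
    by move=> x y; rewrite (mor_B H1 dn) (mor_B H2 dn) opprD addrACA -opprD.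
  by move=> x; rewrite (mor_cov _ H1 dn) (mor_cov _ H2 dn) (m_covB HN dn).
move=> d e ed dn; have en := dvdn_trans ed dn; split=> x.
  by rewrite (mor_res _ H1 ed dn) (mor_res _ H2 ed dn) (m_resB HN ed dn).
by rewrite (mor_tr _ H1 ed dn) (mor_tr _ H2 ed dn) (m_trB HN ed dn).
Qed.

Lemma mor_scale w phi : is_Zmodule n N -> is_mor n M N phi -> is_mor n M N (mscale w phi).
Proof.
move=> HN H1; rewrite /mscale; split.
  move=> d dn; split; first by move=> x y; rewrite (mor_B H1 dn) mulrzBl.
  by move=> x; rewrite (mor_cov _ H1 dn) (afMz (m_covB HN dn)).
move=> d e ed dn; have en := dvdn_trans ed dn; split=> x.
  by rewrite (mor_res _ H1 ed dn) (afMz (m_resB HN ed dn)).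
by rewrite (mor_tr _ H1 ed dn) (afMz (m_trB HN ed dn)).
Qed.

Lemma mor_zero : is_Zmodule n N -> is_mor n M N (fun d _ => 0).
Proof.
move=> HN; split.
  by move=> d dn; split=> [x y|x]; rewrite ?subrr ?(af0 (m_covB HN dn)).
move=> d e ed dn; have en := dvdn_trans ed dn.
by split=> x; rewrite ?(af0 (m_resB HN ed dn)) ?(af0 (m_trB HN ed dn)).
Qed.

Lemma mor_id : is_mor n M M (fun d x => x).
Proof. by split. Qed.

End Mor2.

Section Free.
Variables (n : nat) (F : mackey) (d : nat) (g : F d).
Hypothesis Hf : is_free n g.

Lemma mfree_Z : is_Zmodule n F.
Proof. by case: Hf. Qed.

Lemma mfree_ex (M : mackey) (x : M d) : is_Zmodule n M ->
  exists phi, is_mor n F M phi /\ phi d g = x.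
Proof. by case: Hf => _ H HM; case: (H M HM x) => phi [? ? _]; exists phi. Qed.

Lemma mfree_uniq (M : mackey) phi psi : is_Zmodule n M ->
  is_mor n F M phi -> is_mor n F M psi -> phi d g = psi d g -> meq n phi psi.
Proof.
case: Hf => _ H HM H1 H2 E; case: (H M HM (psi d g)) => chi [_ _ U].
move=> e en x; by rewrite (U _ H1 E e en) (U _ H2 erefl e en).
Qed.
End Free.

Lemma zmor_uniq n (N : mackey) (phi psi : forall d, Zconst d -> N d) :
  (0 < n)%N -> is_mor n Zconst N phi -> is_mor n Zconst N psi ->
  phi 1%N 1 = psi 1%N 1 -> meq n phi psi.
Proof.
move=> n0 H1 H2 E d dn k.
have one : (1 %| d)%N by rewrite dvd1n.
have -> : k = res Zconst d 1 k by [].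
rewrite (mor_res _ H1 one dn) (mor_res _ H2 one dn); congr res.
have -> : k = (1 : int) *~ k by rewrite intz.
have d1 : (1 %| n)%N by rewrite dvd1n.
by rewrite (afMz (mor_B H1 d1)) (afMz (mor_B H2 d1)) E.
Qed.

Lemma divn_chain d e f : (f %| e)%N -> (e %| d)%N -> (0 < f)%N -> (0 < e)%N ->
  (d %/ e * (e %/ f) = d %/ f)%N.
Proof.
move=> fe ed f0 e0.
case/dvdnP: ed e0 => k1 ->; case/dvdnP: fe f0 => k2 -> f0 e0.
by rewrite !mulnK // mulnA mulnK.
Qed.

Lemma Zconst_Z n : (0 < n)%N -> is_Zmodule n Zconst.
Proof.
move=> n0; split; first split.
- move=> d e ed dn; split=> //= x y; exact: mulrnBl.
- move=> d dn /=; split=> // x; by rewrite divnn (dvd_pos n0 dn).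
- move=> d e f fe ed dn /=; split=> // x; rewrite -mulrnA; congr (_ *+ _).
  have f0 := dvd_pos n0 (dvdn_trans fe (dvdn_trans ed dn)).
  have e0 := dvd_pos n0 (dvdn_trans ed dn).
  exact: divn_chain.
- move=> d dn /=; split=> // x; exact: iter_id_fix.
- by move=> d e ed dn /=.
split.
- move=> d d' e ed ed' dn dn' x /=.
  under eq_bigr do rewrite iter_id_fix //.
  rewrite sumr_const card_ord -mulrnA; congr (_ *+ _).
  have d0 := dvd_pos n0 dn.
  have d'0 := dvd_pos n0 dn'.
  have g0 : (0 < gcdn d d')%N by rewrite gcdn_gt0 d0.
  have e0 := dvd_pos n0 (dvdn_trans ed dn).
  have eg : (e %| gcdn d d')%N by rewrite dvdn_gcd ed ed'.
  have Hl : (lcmn d d' %/ d' = d %/ gcdn d d')%N.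
    apply/eqP; rewrite -(eqn_pmul2r d'0) divnK ?dvdn_lcmr //.
    by rewrite /lcmn -divn_mulAC ?dvdn_gcdl.
  by rewrite Hl divn_chain // dvdn_gcdl.
- by move=> d e ed dn x.
Qed.

Definition pb (P : Prop) : bool := if excluded_middle_informative P then true else false.
Lemma pbP P : reflect P (pb P).
Proof. by rewrite /pb; case: excluded_middle_informative => H; constructor. Qed.

Record zclosed (V : zmodType) (P : V -> Prop) : Prop :=
  ZC { zc0 : P 0; zcB : forall x y, P x -> P y -> P (x - y) }.

Definition ZS (V : zmodType) (P : V -> Prop) (H : zclosed P) := {x : V | pb (P x)}.
HB.instance Definition _ (V : zmodType) (P : V -> Prop) (H : zclosed P) :=
  Choice.on (ZS H).

Section ZSops.
Variables (V : zmodType) (P : V -> Prop) (H : zclosed P).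
Lemma zcN x : P x -> P (- x).
Proof. by move=> Px; rewrite -sub0r; apply: zcB => //; apply: zc0. Qed.
Lemma zcD x y : P x -> P y -> P (x + y).
Proof. by move=> Px Py; rewrite -[y]opprK; apply: zcB => //; apply: zcN. Qed.
Definition zs0 : ZS H := exist _ 0 (introT (pbP _) (zc0 H)).
Definition zsN (x : ZS H) : ZS H :=
  exist _ (- val x) (introT (pbP _) (zcN (elimT (pbP _) (valP x)))).
Definition zsD (x y : ZS H) : ZS H :=
  exist _ (val x + val y) (introT (pbP _) (zcD (elimT (pbP _) (valP x)) (elimT (pbP _) (valP y)))).
Lemma zsA : associative zsD.
Proof. by move=> x y z; apply: val_inj; rewrite /= addrA. Qed.
Lemma zsC : commutative zsD.
Proof. by move=> x y; apply: val_inj; rewrite /= addrC. Qed.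
Lemma zs0D : left_id zs0 zsD.
Proof. by move=> x; apply: val_inj; rewrite /= add0r. Qed.
Lemma zsND : left_inverse zs0 zsN zsD.
Proof. by move=> x; apply: val_inj; rewrite /= addNr. Qed.
Definition zin (y : V) : ZS H :=
  match excluded_middle_informative (P y) with
  | left p => exist _ y (introT (pbP _) p)
  | right _ => zs0 end.
Lemma val_zin y : P y -> val (zin y) = y.
Proof. by rewrite /zin; case: excluded_middle_informative. Qed.
Lemma zvalP (x : ZS H) : P (val x).
Proof. exact: (elimT (pbP _) (valP x)). Qed.
End ZSops.
HB.instance Definition _ (V : zmodType) (P : V -> Prop) (H : zclosed P) :=
  GRing.isZmodule.Build (ZS H) (@zsA V P H) (@zsC V P H) (@zs0D V P H) (@zsND V P H).

Lemma val_ZSB (V : zmodType) (P : V -> Prop) (H : zclosed P) :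
  {morph (fun x : ZS H => val x) : x y / x - y}.
Proof. by []. Qed.

Section Gen.
Variables (n c : nat) (Fc : mackey) (gc : Fc c).
Hypotheses (Hfree : is_free n gc) (n0 : (0 < n)%N) (cn : (c %| n)%N).
Let HF : is_Zmodule n Fc := mfree_Z Hfree.

Definition vv d : Fc d := tr Fc (lcmn d c) d (res Fc (lcmn d c) c gc).
Definition spn d (y : Fc d) : Prop :=
  exists s : seq (nat * int), y = \sum_(p <- s) iter p.1 (cov Fc d) (vv d) *~ p.2.

Lemma span0 d : spn (0 : Fc d).
Proof. by exists [::]; rewrite big_nil. Qed.
Lemma spanD d (y z : Fc d) : spn y -> spn z -> spn (y + z).
Proof. by case=> s1 -> [s2 ->]; exists (s1 ++ s2); rewrite big_cat. Qed.
Lemma spanZ d (y : Fc d) k : spn y -> spn (y *~ k).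
Proof.
case=> s ->; exists [seq (p.1, p.2 * k) | p <- s]; rewrite big_map.
rewrite (afsum (fun x y => mulrzBl x y k)); apply: eq_bigr => p _ /=.
by rewrite mulrzA.
Qed.
Lemma spanB d (y z : Fc d) : spn y -> spn z -> spn (y - z).
Proof. by move=> Hy Hz; apply: spanD => //; rewrite -mulrN1z; apply: spanZ. Qed.
Lemma span_zc d : zclosed (@spn d).
Proof. by split; [exact: span0 | exact: spanB]. Qed.
Lemma spanSum d (I : Type) (r : seq I) (Q : pred I) (F : I -> Fc d) :
  (forall i, spn (F i)) -> spn (\sum_(i <- r | Q i) F i).
Proof.
move=> H; elim: r => [|a r IH]; first by rewrite big_nil; apply: span0.
by rewrite big_cons; case: (Q a) => //; apply: spanD.
Qed.
Lemma span_atom d m : spn (iter m (cov Fc d) (vv d)).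
Proof. by exists [:: (m, 1)]; rewrite big_seq1 /=. Qed.
Lemma span_img d e (f : Fc d -> Fc e) (y : Fc d) : {morph f : x y / x - y} ->
  (forall m, spn (f (iter m (cov Fc d) (vv d)))) -> spn y -> spn (f y).
Proof.
move=> fB H [s ->]; rewrite (afsum fB); apply: spanSum => p.
by rewrite (afMz fB); apply: spanZ.
Qed.

Lemma lcm_dvd_n d : (d %| n)%N -> (lcmn d c %| n)%N.
Proof. by move=> dn; rewrite dvdn_lcm dn cn. Qed.

Lemma span_cov d (y : Fc d) : (d %| n)%N -> spn y -> spn (cov Fc d y).
Proof. move=> dn; apply: span_img (m_covB HF dn) _ => m; exact: (span_atom d m.+1). Qed.
Lemma span_iter d k (y : Fc d) : (d %| n)%N -> spn y -> spn (iter k (cov Fc d) y).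
Proof. by move=> dn Hy; elim: k => //= k IH; apply: span_cov. Qed.
Lemma span_con d (y : Fc d) : (d %| n)%N -> spn y -> spn (con Fc d y).
Proof. by move=> dn Hy; rewrite (m_coniter HF n0 _ dn); apply: span_iter. Qed.

Lemma lcm_lem e d : (e %| d)%N -> lcmn (lcmn e c) d = lcmn d c.
Proof. by move=> ed; rewrite lcmnAC (lcmn_idPr ed). Qed.

Lemma res_vv d e : (e %| d)%N -> (d %| n)%N ->
  res Fc d e (vv e) = \sum_(j < (gcdn (lcmn e c) d %/ e)%N)
     iter (j * e) (cov Fc d) (vv d).
Proof.
move=> ed dn; have en := dvdn_trans ed dn.
rewrite /vv (m_dcf HF) ?dvdn_lcml ?lcm_dvd_n //.
apply: eq_bigr => j _.
have Ld : (lcmn (lcmn e c) d %| n)%N by rewrite dvdn_lcm lcm_dvd_n.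
rewrite (m_resres HF) ?dvdn_lcmr ?dvdn_lcml //.
rewrite (m_triter HF) ?dvdn_lcmr //; congr iter.
by rewrite lcm_lem.
Qed.

Lemma tr_vv d e : (e %| d)%N -> (d %| n)%N ->
  tr Fc d e (vv d) = vv e *+ (lcmn d c %/ lcmn e c).
Proof.
move=> ed dn; have en := dvdn_trans ed dn.
have ele : (lcmn e c %| lcmn d c)%N by rewrite dvdn_lcm dvdn_lcmr (dvdn_trans ed) ?dvdn_lcml.
rewrite /vv (m_trtr HF) ?dvdn_lcml ?lcm_dvd_n //.
rewrite -(@m_trtr n Fc HF (lcmn d c) (lcmn e c) e (res Fc (lcmn d c) c gc) (dvdn_lcml e c) ele) ?lcm_dvd_n //.
rewrite -(@m_resres n Fc HF (lcmn d c) (lcmn e c) c gc (dvdn_lcmr e c) ele) ?lcm_dvd_n //.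
rewrite (m_coh HF) ?lcm_dvd_n //.
by rewrite (afMn (m_trB HF _ _)) ?dvdn_lcml ?lcm_dvd_n.
Qed.

Lemma span_res d e (y : Fc e) : (e %| d)%N -> (d %| n)%N -> spn y -> spn (res Fc d e y).
Proof.
move=> ed dn; apply: span_img (m_resB HF ed dn) _ => m.
rewrite (m_resiter HF) //; apply: span_iter => //.
rewrite res_vv //; apply: spanSum => j; exact: span_atom.
Qed.

Lemma span_tr d e (y : Fc d) : (e %| d)%N -> (d %| n)%N -> spn y -> spn (tr Fc d e y).
Proof.
move=> ed dn; have en := dvdn_trans ed dn.
apply: span_img (m_trB HF ed dn) _ => m.
rewrite (m_triter HF) //; apply: span_iter => //.
rewrite tr_vv // pmulrn; apply: spanZ; exact: (span_atom e 0).
Qed.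

Definition SpM : mackey :=
  @Mackey (fun d => (ZS (span_zc d) : zmodType))
    (fun d e x => zin (span_zc d) (res Fc d e (val x)))
    (fun d e x => zin (span_zc e) (tr Fc d e (val x)))
    (fun d x => zin (span_zc d) (cov Fc d (val x)))
    (fun d x => zin (span_zc d) (con Fc d (val x))).

Lemma val_res d e (x : SpM e) : (e %| d)%N -> (d %| n)%N ->
  val (res SpM d e x) = res Fc d e (val x).
Proof. by move=> ed dn; rewrite val_zin //; apply: span_res => //; apply: zvalP. Qed.
Lemma val_tr d e (x : SpM d) : (e %| d)%N -> (d %| n)%N ->
  val (tr SpM d e x) = tr Fc d e (val x).
Proof. by move=> ed dn; rewrite val_zin //; apply: span_tr => //; apply: zvalP. Qed.
Lemma val_cov d (x : SpM d) : (d %| n)%N -> val (cov SpM d x) = cov Fc d (val x).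
Proof. by move=> dn; rewrite val_zin //; apply: span_cov => //; apply: zvalP. Qed.
Lemma val_con d (x : SpM d) : (d %| n)%N -> val (con SpM d x) = con Fc d (val x).
Proof. by move=> dn; rewrite val_zin //; apply: span_con => //; apply: zvalP. Qed.
Lemma val_iter d k (x : SpM d) : (d %| n)%N ->
  val (iter k (cov SpM d) x) = iter k (cov Fc d) (val x).
Proof. by move=> dn; apply: iter_comm => y; apply: val_cov. Qed.
Lemma valB d : {morph (fun x : SpM d => val x) : x y / x - y}.
Proof. by []. Qed.

Lemma SpM_Z : is_Zmodule n SpM.
Proof.
split; first split.
- move=> d e ed dn; have en := dvdn_trans ed dn.
  by split=> x y; apply: val_inj;
    rewrite ?val_res ?val_tr // !valB ?val_res ?val_tr // ?(m_resB HF) ?(m_trB HF).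
- move=> d dn; split.
  + by move=> x y; apply: val_inj; rewrite val_cov // !valB !val_cov // (m_covB HF).
  + by move=> x y; apply: val_inj; rewrite val_con // !valB !val_con // (m_conB HF).
  + by move=> x; apply: val_inj; rewrite val_res // (m_resid HF).
  + by move=> x; apply: val_inj; rewrite val_tr // (m_trid HF).
- move=> d e f fe ed dn; have en := dvdn_trans ed dn; have fd := dvdn_trans fe ed.
  by split=> x; apply: val_inj; rewrite ?val_res ?val_tr // ?val_res ?val_tr //
    ?(m_resres HF) ?(m_trtr HF).
- move=> d dn; split=> x; apply: val_inj.
  + by rewrite val_cov // val_con // (m_covcon HF).
  + by rewrite val_con // val_cov // (m_concov HF).
  + by rewrite val_iter // (m_covn HF).
- move=> d e ed dn; have en := dvdn_trans ed dn.
  split=> x; apply: val_inj.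
  + by rewrite val_tr // val_cov // val_cov // val_tr // (m_trcov HF).
  + by rewrite val_res // val_con // val_con // val_res // (m_rescon HF).
split.
- move=> d d' e ed ed' dn dn' x; apply: val_inj.
  have L : (lcmn d d' %| n)%N by rewrite dvdn_lcm dn dn'.
  rewrite val_res // val_tr // (m_dcf HF) //.
  rewrite (afsum (@valB d')); apply: eq_bigr => j _.
  by rewrite val_tr ?dvdn_lcmr // val_iter // val_res ?dvdn_lcml.
- move=> d e ed dn x; apply: val_inj; have en := dvdn_trans ed dn.
  by rewrite val_tr // val_res // (m_coh HF) // (afMn (@valB e)).
Qed.

Lemma span_gc : spn gc.
Proof.
have: spn (vv c) by exact: (span_atom c 0).
rewrite /vv.
have -> : lcmn c c = c by apply/lcmn_idPl.
by rewrite (m_resid HF) // (m_trid HF).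
Qed.

Theorem generation d (y : Fc d) : (d %| n)%N -> spn y.
Proof.
move=> dn.
have [phi [Hphi Ec]] := @mfree_ex n Fc c gc Hfree SpM (zin (span_zc c) gc) SpM_Z.
have Hval : is_mor n SpM Fc (fun d (x : SpM d) => val x).
  split.
    by move=> e en; split=> [x z|x] //; rewrite val_cov.
  by move=> e f fe en; split=> x; rewrite ?val_res ?val_tr.
have H1 := mor_comp Hphi Hval.
have E : meq n (mcomp (fun d (x : SpM d) => val x) phi) (fun d x => x).
  apply: (mfree_uniq Hfree HF H1 (mor_id n Fc)).
  by rewrite /mcomp Ec val_zin //; apply: span_gc.
rewrite -(E d dn y) /mcomp; exact: zvalP.
Qed.
End Gen.

Section NT.
Variable V : zmodType.

Lemma sum_split (H : nat -> V) p q :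
  \sum_(0 <= k < p * q) H k = \sum_(0 <= j < p) \sum_(0 <= k < q) H (j + k * p)%N.
Proof.
elim: q => [|q IH]; first by rewrite muln0 big_geq //; under eq_bigr do rewrite big_geq //; rewrite big1.
rewrite mulnS addnC (@big_cat_nat _ _ _ (p * q)%N) ?leq_addr //= IH.
rewrite -{1}[(p * q)%N]add0n big_addn addKn.
rewrite -big_split /=; apply: eq_bigr => j _.
by rewrite big_nat_recr //= mulnC addnC.
Qed.

Lemma coprime_mul_inj m q (k k' : nat) : coprime m q -> (k < q)%N -> (k' < q)%N ->
  (k * m == k' * m %[mod q])%N -> k = k'.
Proof.
move=> cop kq k'q.
wlog le : k k' kq k'q / (k' <= k)%N.
  move=> W E; case: (leqP k' k) => [l|l]; first exact: W.
  by apply/esym/W => //; [exact: ltnW | rewrite eq_sym].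
rewrite eqn_mod_dvd ?leq_mul2r ?le ?orbT // -mulnBl.
rewrite Gauss_dvdl; last by rewrite coprime_sym.
move=> D.
have lt : (k - k' < q)%N by apply: leq_ltn_trans (leq_subr _ _) kq.
have : (k - k')%N = 0%N.
  case E: (k - k')%N => [//|x]; rewrite E in D lt.
  by have := dvdn_leq (ltn0Sn x) D; rewrite leqNgt lt.
lia.
Qed.

Lemma sum_mul_reindex (H : nat -> V) q m s : (0 < q)%N -> coprime m q ->
  (forall x, H (x %% q)%N = H x) ->
  \sum_(0 <= k < q) H (k * m + s)%N = \sum_(0 <= k < q) H k.
Proof.
move=> q0 cop Hp; rewrite !big_mkord.
pose h (k : 'I_q) : 'I_q := Ordinal (ltn_pmod (k * m + s) q0).
have hi : injective h.
  move=> k k' /(congr1 val) /= /eqP E.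
  apply: val_inj; apply: coprime_mul_inj cop (ltn_ord k) (ltn_ord k') _.
  by rewrite eqn_modDr in E.
rewrite [RHS](reindex_inj hi) /=; apply: eq_bigr => k _.
by rewrite /= Hp.
Qed.

Lemma sum_rot (H : nat -> V) q s : (0 < q)%N ->
  (forall x, H (x %% q)%N = H x) ->
  \sum_(0 <= k < q) H (k + s)%N = \sum_(0 <= k < q) H k.
Proof.
move=> q0 Hp; rewrite -(sum_mul_reindex s q0 (coprime1n q) Hp).
by apply: eq_bigr => k _; rewrite muln1.
Qed.

Lemma coprime_div_gcd m n : (0 < gcdn m n)%N ->
  coprime (m %/ gcdn m n) (n %/ gcdn m n).
Proof.
move=> g0; rewrite /coprime.
have := muln_gcdl (m %/ gcdn m n)%N (n %/ gcdn m n)%N (gcdn m n).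
rewrite !divnK ?dvdn_gcdl ?dvdn_gcdr // => E.
by rewrite -(eqn_pmul2r g0) E mul1n.
Qed.
End NT.

Definition evf (d : nat) (f : {ffun 'I_d -> int}) (x : nat) : int :=
  if insub (x %% d)%N is Some i then f i else 0.
Definition csum (d e : nat) (F : nat -> int) (x : nat) : int :=
  \sum_(0 <= k < (d %/ e)%N) F (x + k * e)%N.

Definition Mres d e (f : {ffun 'I_e -> int}) : {ffun 'I_d -> int} :=
  [ffun i : 'I_d => evf f i].
Definition Mtr d e (f : {ffun 'I_d -> int}) : {ffun 'I_e -> int} :=
  [ffun i : 'I_e => csum d e (evf f) i].
Definition Mcov d (f : {ffun 'I_d -> int}) : {ffun 'I_d -> int} :=
  [ffun i : 'I_d => evf f i.+1].
Definition Mcon d (f : {ffun 'I_d -> int}) : {ffun 'I_d -> int} :=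
  [ffun i : 'I_d => evf f (i + d.-1)%N].
Arguments Mres : clear implicits.
Arguments Mtr : clear implicits.
Arguments Mcov : clear implicits.
Arguments Mcon : clear implicits.
Arguments csum : clear implicits.
Definition MM : mackey :=
  @Mackey (fun d => ({ffun 'I_d -> int} : zmodType)) Mres Mtr Mcov Mcon.

Section Ev.
Variables (d : nat) (d0 : (0 < d)%N).
Implicit Types (f g : {ffun 'I_d -> int}).

Lemma evf_ffun (G : nat -> int) x : evf [ffun i : 'I_d => G i] x = G (x %% d)%N.
Proof.
rewrite /evf; case: insubP => [i _ <-|]; first by rewrite ffunE.
by rewrite ltn_pmod.
Qed.
Lemma evf_ord f (i : 'I_d) : evf f i = f i.
Proof. by rewrite /evf modn_small // valK. Qed.
Lemma evf_mod f x : evf f (x %% d)%N = evf f x.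
Proof. by rewrite /evf modn_mod. Qed.
Lemma evf_per f x k : evf f (x + k * d)%N = evf f x.
Proof. by rewrite -evf_mod addnC modnMDl evf_mod. Qed.
Lemma evf_modD f x y : evf f (x %% d + y)%N = evf f (x + y)%N.
Proof. by rewrite -evf_mod modnDml evf_mod. Qed.
Lemma ffun_evf f g : (forall x, evf f x = evf g x) -> f = g.
Proof. by move=> H; apply/ffunP => i; rewrite -!evf_ord. Qed.
Lemma evfB f g x : evf (f - g) x = evf f x - evf g x.
Proof. by rewrite /evf; case: insub => [i|]; rewrite ?subrr // !ffunE. Qed.
End Ev.

Lemma evf_dvd d e (f : {ffun 'I_e -> int}) x : (e %| d)%N -> evf f (x %% d)%N = evf f x.
Proof. by move=> ed; rewrite /evf (modn_dvdm _ ed). Qed.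

Lemma per_step (G : nat -> int) d q g a k : (forall y, G (y %% d)%N = G y) -> (q * g = d)%N ->
  G (a + (k %% q) * g)%N = G (a + k * g)%N.
Proof.
move=> Gp qg; rewrite -Gp -[in RHS]Gp; congr G.
rewrite [in RHS](divn_eq k q) mulnDl -mulnA qg addnCA.
by rewrite modnMDl.
Qed.

Lemma cls_mod (F : nat -> int) d e x : (forall y, F (y %% d)%N = F y) ->
  (e %| d)%N -> (0 < e)%N -> (0 < d)%N ->
  csum d e F (x %% e)%N = csum d e F x.
Proof.
move=> Fp ed e0 d0; rewrite /csum.
have q0 : (0 < d %/ e)%N by rewrite divn_gt0 // dvdn_leq.
have qe : (d %/ e * e = d)%N by rewrite divnK.
rewrite {2}(divn_eq x e).
transitivity (\sum_(0 <= k < d %/ e) F (x %% e + (k + x %/ e) * e)%N).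
  rewrite -(@sum_rot _ (fun k => F (x %% e + k * e)%N) (d %/ e) (x %/ e) q0) //.
  by move=> y; apply: per_step Fp qe.
apply: eq_bigr => k _; congr F; rewrite mulnDl; lia.
Qed.

Section EvOps.
Lemma evf_res d e (f : {ffun 'I_e -> int}) x : (0 < d)%N -> (e %| d)%N ->
  evf (Mres d e f) x = evf f x.
Proof. by move=> d0 ed; rewrite /Mres (@evf_ffun _ d0 (fun i => evf f i)) // evf_dvd. Qed.
Lemma evf_tr d e (f : {ffun 'I_d -> int}) x : (0 < e)%N -> (0 < d)%N -> (e %| d)%N ->
  evf (Mtr d e f) x = csum d e (evf f) x.
Proof.
move=> e0 d0 ed; rewrite /Mtr (@evf_ffun _ e0 (fun i => csum d e (evf f) i)) //.
by rewrite cls_mod // => y; apply: evf_mod.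
Qed.
Lemma evf_cov d (f : {ffun 'I_d -> int}) x : (0 < d)%N -> evf (Mcov d f) x = evf f x.+1.
Proof.
move=> d0; rewrite /Mcov (@evf_ffun _ d0 (fun i => evf f i.+1)) //.
by have := evf_modD f x 1; rewrite !addn1.
Qed.
Lemma evf_iter d k (f : {ffun 'I_d -> int}) x : (0 < d)%N ->
  evf (iter k (Mcov d) f) x = evf f (x + k)%N.
Proof.
move=> d0; elim: k x => [|k IH] x /=; first by rewrite addn0.
by rewrite evf_cov // IH addSnnS.
Qed.
Lemma evf_con d (f : {ffun 'I_d -> int}) x : (0 < d)%N -> evf (Mcon d f) x = evf f (x + d.-1)%N.
Proof.
move=> d0; rewrite /Mcon (@evf_ffun _ d0 (fun i => evf f (i + d.-1)%N)) //.
by rewrite evf_modD.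
Qed.
Lemma evf_sum d (I : Type) (r : seq I) (P : pred I) (F : I -> {ffun 'I_d -> int}) x :
  evf (\sum_(i <- r | P i) F i) x = \sum_(i <- r | P i) evf (F i) x.
Proof. by apply: (afsum (f := fun f => evf f x)) => f g; apply: evfB. Qed.
Lemma evfMn d (f : {ffun 'I_d -> int}) k x : evf (f *+ k) x = evf f x *+ k.
Proof. by apply: (afMn (f := fun f => evf f x)) => f' g; apply: evfB. Qed.
End EvOps.

Lemma csumB d e (F G : nat -> int) x :
  csum d e (fun y => F y - G y) x = csum d e F x - csum d e G x.
Proof. by rewrite /csum -sumrB. Qed.

Lemma MM_Z n : (0 < n)%N -> is_Zmodule n MM.
Proof.
move=> n0; have pos := dvd_pos n0.
split; first split.
- move=> d e ed dn; have en := dvdn_trans ed dn.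
  have d0 := pos _ dn; have e0 := pos _ en.
  split=> f g /=; apply: ffun_evf => x.
    by rewrite evfB !evf_res // evfB.
  rewrite evfB !evf_tr // -csumB /csum; apply: eq_bigr => k _; exact: evfB.
- move=> d dn; have d0 := pos _ dn; split=> [f g|f g|f|f] /=.
  + by apply: ffun_evf => x; rewrite evfB !evf_cov // evfB.
  + by apply: ffun_evf => x; rewrite evfB !evf_con // evfB.
  + by apply: ffun_evf => x; rewrite evf_res.
  + apply: ffun_evf => x; rewrite evf_tr // /csum divnn d0 big_nat1.
    by rewrite mul0n addn0.
- move=> d e f fe ed dn; have en := dvdn_trans ed dn; have fn := dvdn_trans fe en.
  have d0 := pos _ dn; have e0 := pos _ en; have f0 := pos _ fn.
  have fd := dvdn_trans fe ed.
  split=> x /=; apply: ffun_evf => // y.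
    by rewrite !evf_res.
  rewrite !evf_tr // /csum -(divn_chain fe ed) // mulnC sum_split.
  apply: eq_bigr => j _; rewrite evf_tr //; apply: eq_bigr => k _.
  congr evf; rewrite mulnDl -mulnA divnK //; lia.
- move=> d dn; have d0 := pos _ dn; split=> f /=; apply: ffun_evf => x.
  + rewrite evf_cov // evf_con //; rewrite -[RHS](evf_per _ _ 1).
    congr evf; lia.
  + rewrite evf_con // evf_cov // -[RHS](evf_per _ _ 1); congr evf; lia.
  + by rewrite evf_iter // -{2}[d]mul1n evf_per.
- move=> d e ed dn; have en := dvdn_trans ed dn.
  have d0 := pos _ dn; have e0 := pos _ en.
  split=> f /=; apply: ffun_evf => x.
    rewrite evf_tr // evf_cov // evf_tr // /csum; apply: eq_bigr => k _.
    by rewrite evf_cov // addSn.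
  rewrite evf_res // evf_con // evf_con // evf_res //.
  have qe : (d %/ e * e = d)%N by rewrite divnK.
  have q0 : (0 < d %/ e)%N by rewrite divn_gt0 // dvdn_leq.
  rewrite -[LHS](evf_per _ _ (d %/ e).-1); congr evf.
  move: qe q0; case: (d %/ e)%N => // q; rewrite mulSn => <- _ /=.
  lia.
split.
- move=> d d' e ed ed' dn dn' f /=.
  have d0 := pos _ dn; have d'0 := pos _ dn'; have e0 := pos _ (dvdn_trans ed dn).
  have L : (lcmn d d' %| n)%N by rewrite dvdn_lcm dn dn'.
  have L0 := pos _ L.
  have g0 : (0 < gcdn d d')%N by rewrite gcdn_gt0 d0.
  have eg : (e %| gcdn d d')%N by rewrite dvdn_gcd ed ed'.
  have Hl : (lcmn d d' %/ d' = d %/ gcdn d d')%N.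
    apply/eqP; rewrite -(eqn_pmul2r d'0) divnK ?dvdn_lcmr //.
    by rewrite /lcmn -divn_mulAC ?dvdn_gcdl.
  apply: ffun_evf => x.
  rewrite evf_res // evf_tr // evf_sum /csum.
  rewrite -(divn_chain eg (dvdn_gcdl d d')) // mulnC sum_split big_mkord.
  apply: eq_bigr => j _.
  rewrite evf_tr ?dvdn_lcmr // /csum Hl.
  pose H k := evf f (x + j * e + k * gcdn d d')%N.
  have Hp : forall y, H (y %% (d %/ gcdn d d'))%N = H y.
    move=> y; apply: (per_step (d := d)) => //; first by move=> z; apply: evf_mod.
    by rewrite divnK // dvdn_gcdl.
  have cop : coprime (d' %/ gcdn d d') (d %/ gcdn d d').
    by rewrite coprime_sym coprime_div_gcd.
  have q0 : (0 < d %/ gcdn d d')%N by rewrite divn_gt0 // dvdn_leq // dvdn_gcdl.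
  have := sum_mul_reindex 0 q0 cop Hp; rewrite /H => E.
  transitivity (\sum_(0 <= k < d %/ gcdn d d') evf f (x + j * e + k * gcdn d d')%N).
    apply: eq_bigr => k _; congr evf; rewrite mulnDl -mulnA divnK //; lia.
  rewrite -E; apply: eq_bigr => k _.
  rewrite evf_iter // evf_res ?dvdn_lcml // addn0 -mulnA divnK ?dvdn_gcdr //.
  congr evf; lia.
- move=> d e ed dn f /=; have en := dvdn_trans ed dn.
  have d0 := pos _ dn; have e0 := pos _ en.
  apply: ffun_evf => x; rewrite evf_tr // evfMn /csum.
  under eq_bigr do rewrite evf_res // evf_per.
  by rewrite sumr_const_nat subn0.
Qed.

Lemma iter_period (T : Type) (f : T -> T) p y k : iter p f y = y -> iter (k * p) f y = y.
Proof. by move=> H; elim: k => // k IH; rewrite mulSn iterD IH H. Qed.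

Lemma lcm_div d d' : (0 < d')%N -> (lcmn d d' %/ d' = d %/ gcdn d d')%N.
Proof.
move=> d'0; apply/eqP; rewrite -(eqn_pmul2r d'0) divnK ?dvdn_lcmr //.
by rewrite /lcmn -divn_mulAC ?dvdn_gcdl.
Qed.

Section FactsV.
Variables (n c b : nat) (Fc : mackey) (gc : Fc c).
Hypotheses (Hfree : is_free n gc) (n0 : (0 < n)%N) (cn : (c %| n)%N) (bn : (b %| n)%N).
Let HF := mfree_Z Hfree.
Local Notation v := (vv gc b).

Lemma b0 : (0 < b)%N. Proof. by have := dvd_pos n0 bn. Qed.
Lemma c0 : (0 < c)%N. Proof. by have := dvd_pos n0 cn. Qed.
Lemma g0 : (0 < gcdn b c)%N. Proof. by rewrite gcdn_gt0 b0. Qed.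
Lemma ln : (lcmn b c %| n)%N. Proof. by rewrite dvdn_lcm bn cn. Qed.

Lemma v_c : iter c (cov Fc b) v = v.
Proof.
rewrite /vv -(m_triter HF) ?dvdn_lcml ?ln //.
by rewrite -(m_resiter HF) ?dvdn_lcmr ?ln // (m_covn HF).
Qed.

Lemma v_g : iter (gcdn b c) (cov Fc b) v = v.
Proof.
case: (egcdnP c b0) => km kn E _.
have H1 : iter (km * b) (cov Fc b) v = v by apply: iter_period; apply: (m_covn HF).
have H2 : iter (kn * c) (cov Fc b) v = v by apply: iter_period; apply: v_c.
by rewrite -{2}H1 E addnC iterD H2.
Qed.

Lemma v_mod m : iter m (cov Fc b) v = iter (m %% gcdn b c) (cov Fc b) v.
Proof. by rewrite {1}(divn_eq m (gcdn b c)) addnC iterD iter_period // v_g. Qed.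

Lemma N_sum : res Fc b 1 (tr Fc c 1 gc) = \sum_(r < gcdn b c) iter r (cov Fc b) v.
Proof.
rewrite (m_dcf HF) ?dvd1n // divn1 gcdnC [lcmn c b]lcmnC; apply: eq_bigr => r _.
rewrite /vv -(m_triter HF) ?dvdn_lcml ?ln //; congr (tr _ _ _ (iter _ _ _)); exact: muln1.
Qed.

Lemma regroup (s : seq (nat * int)) :
  \sum_(p <- s) iter p.1 (cov Fc b) v *~ p.2 =
  \sum_(r < gcdn b c) iter r (cov Fc b) v *~ (\sum_(p <- s | (p.1 %% gcdn b c == r)%N) p.2).
Proof.
have G0 := g0.
transitivity (\sum_(p <- s) \sum_(r < gcdn b c | (p.1 %% gcdn b c == r)%N) iter r (cov Fc b) v *~ p.2).
  apply: eq_bigr => p _.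
  rewrite (big_pred1 (Ordinal (ltn_pmod p.1 G0))) /=; first by rewrite -v_mod.
  by move=> r; rewrite /= eq_sym -val_eqE.
rewrite (exchange_big_dep xpredT) //=; apply: eq_bigr => r _.
rewrite (afsum (f := fun a : int => iter r (cov Fc b) v *~ a)) //.
by move=> x y; rewrite mulrzBr.
Qed.
End FactsV.

Definition delta c : {ffun 'I_c -> int} :=
  [ffun i : 'I_c => if (nat_of_ord i == 0)%N then 1 else 0].

Arguments delta : clear implicits.

Lemma evf_delta c z : (0 < c)%N -> evf (delta c) z = if (z %% c == 0)%N then 1 else 0.
Proof. by move=> c0; rewrite /delta (@evf_ffun _ c0 (fun i => if (i == 0)%N then 1 else 0)). Qed.

Lemma evfMz d (f : {ffun 'I_d -> int}) k x : evf (f *~ k) x = evf f x *~ k.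
Proof. by apply: (afMz (f := fun f => evf f x)) => f' g; apply: evfB. Qed.

Lemma mod_sel g r r' : (r < g)%N -> (r' < g)%N ->
  ((((g - r) %% g + r') %% g == 0)%N) = (r' == r).
Proof.
move=> rg r'g; rewrite modnDml.
case: (leqP r r') => h.
  have -> : (g - r + r' = 1 * g + (r' - r))%N by lia.
  rewrite modnMDl modn_small; last by lia.
  by apply/idP/idP => /eqP ?; apply/eqP; lia.
rewrite modn_small; last by lia.
by apply/idP/idP => /eqP ?; apply/eqP; lia.
Qed.

Section FactsPhi.
Variables (n c b : nat) (Fc : mackey) (gc : Fc c).
Hypotheses (Hfree : is_free n gc) (n0 : (0 < n)%N) (cn : (c %| n)%N) (bn : (b %| n)%N).
Let HF := mfree_Z Hfree.
Local Notation v := (vv gc b).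
Local Notation g := (gcdn b c).
Variable phi : forall d, Fc d -> MM d.
Arguments phi : clear implicits.
Hypotheses (Hphi : is_mor n Fc MM phi) (Hd : phi c gc = delta c).

Lemma phi_v u : evf (phi b v) u = if (u %% g == 0)%N then 1 else 0.
Proof.
have B0 := b0 n0 bn; have C0 := c0 n0 cn; have G0 := g0 c n0 bn.
have L0 := dvd_pos n0 (ln cn bn).
rewrite /vv (mor_tr _ Hphi) ?dvdn_lcml ?ln // (mor_res _ Hphi) ?dvdn_lcmr ?ln // Hd.
rewrite evf_tr ?dvdn_lcml // /csum.
under eq_bigr do rewrite evf_res ?dvdn_lcmr //.
rewrite lcmnC lcm_div // gcdnC.
have qg : (c %/ g * g = c)%N by rewrite divnK // dvdn_gcdr.
have q0 : (0 < c %/ g)%N by rewrite divn_gt0 // dvdn_leq // dvdn_gcdr.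
pose H k := evf (delta c) (u + k * g)%N.
have Hp : forall y, H (y %% (c %/ g))%N = H y.
  by move=> y; apply: (per_step (d := c)) => // z; apply: evf_mod.
have cop : coprime (b %/ g) (c %/ g) by apply: coprime_div_gcd.
have E := sum_mul_reindex 0 q0 cop Hp.
transitivity (\sum_(0 <= k < c %/ g) H (k * (b %/ g) + 0)%N).
  by apply: eq_bigr => k _; rewrite /H addn0 -mulnA divnK // dvdn_gcdl.
rewrite E /H.
transitivity (csum c g (evf (delta c)) u); first by [].
rewrite -cls_mod ?dvdn_gcdr //; last by move=> z; apply: evf_mod.
rewrite /csum big_ltn // mul0n addn0 evf_delta // modn_small; last first.
  by apply: leq_trans (ltn_pmod _ G0) (dvdn_leq C0 (dvdn_gcdr _ _)).
rewrite big_nat_cond big1 ?addr0 // => k /andP [/andP [k1 kq] _].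
rewrite evf_delta // modn_small.
  by case: ifP => // /eqP; have := ltn_pmod u G0; nia.
have := ltn_pmod u G0.
have : (k.+1 * g <= c %/ g * g)%N by rewrite leq_mul2r kq orbT.
rewrite qg mulSn; lia.
Qed.

Lemma phi_iter r u : evf (phi b (iter r (cov Fc b) v)) u =
  if ((u + r) %% g == 0)%N then 1 else 0.
Proof. by rewrite (mor_iter _ _ Hphi bn) evf_iter ?(b0 n0 bn) // phi_v. Qed.
End FactsPhi.

Section FactB.
Variables (n c b : nat) (Fc : mackey) (gc : Fc c).
Hypotheses (Hfree : is_free n gc) (n0 : (0 < n)%N) (cn : (c %| n)%N) (bn : (b %| n)%N).
Let HF := mfree_Z Hfree.
Local Notation v := (vv gc b).
Local Notation g := (gcdn b c).

Lemma factB (x : Fc b) : con Fc b x = x -> exists k : int, x = res Fc b 1 (tr Fc c 1 gc) *~ k.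
Proof.
move=> Hcon.
have B0 := b0 n0 bn; have G0 := g0 c n0 bn.
have [s Es] := generation Hfree n0 cn x bn.
rewrite (regroup Hfree n0 cn bn) in Es.
set A := fun r : nat => \sum_(p <- s | (p.1 %% g == r)%N) p.2.
have [phi [Hphi Hd]] := @mfree_ex n Fc c gc Hfree MM (delta c) (MM_Z n0).
have H1 : forall u, evf (phi b x) (u + b.-1)%N = evf (phi b x) u.
  move=> u; rewrite -evf_con //.
  change (Mcon b (phi b x)) with (con MM b (phi b x)).
  by rewrite -(mor_con _ HF (MM_Z n0) n0 Hphi bn) Hcon.
have Hc : forall u, evf (phi b x) u = evf (phi b x) 0.
  elim=> // u IH; rewrite -IH -(H1 u.+1).
  by rewrite -[in RHS](evf_per _ _ 1) mul1n; congr evf; lia.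
have Hv : forall r, (r < g)%N -> evf (phi b x) ((g - r) %% g)%N = A r.
  move=> r rg; rewrite Es (afsum (mor_B Hphi bn)) evf_sum.
  under eq_bigr do rewrite (afMz (mor_B Hphi bn)) evfMz (phi_iter n0 cn bn Hphi Hd).
  rewrite (bigD1 (Ordinal rg)) //= (mod_sel rg rg) eqxx /= intz.
  rewrite [X in _ + X = _]big1 ?addr0 //.
  move=> r' /= Hr'; rewrite mod_sel //.
  case: eqP => [E|_]; last by rewrite mul0rz.
  by move: Hr'; rewrite -val_eqE /= E eqxx.
exists (A 0%N).
rewrite Es (N_sum Hfree cn bn) (afsum (f := fun y => y *~ A 0%N)); last first.
  by move=> y z; rewrite mulrzBl.
apply: eq_bigr => r _; congr (_ *~ _).
rewrite -[LHS]/(A r) -(Hv r) // -(Hv 0%N G0).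
by rewrite [LHS]Hc [RHS]Hc.
Qed.
End FactB.

Section FactA.
Variables (n c b : nat) (Fc : mackey) (gc : Fc c).
Hypotheses (Hfree : is_free n gc) (n0 : (0 < n)%N) (cn : (c %| n)%N) (bn : (b %| n)%N).
Let HF := mfree_Z Hfree.
Local Notation v := (vv gc b).
Variable Ec : forall d, Fc d -> Zconst d.
Arguments Ec : clear implicits.
Hypotheses (HE : is_mor n Fc Zconst Ec) (HE1 : Ec c gc = 1).

Lemma cg_eq : (lcmn b c %/ b = c %/ gcdn b c)%N.
Proof. by rewrite lcmnC lcm_div ?(b0 n0 bn) // gcdnC. Qed.

Lemma Ec_v m : Ec b (iter m (cov Fc b) v) = (c %/ gcdn b c)%:Z.
Proof.
rewrite (mor_iter _ _ HE bn) iter_id_fix //.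
rewrite /vv (mor_tr _ HE) ?dvdn_lcml ?(ln cn bn) // (mor_res _ HE) ?dvdn_lcmr ?(ln cn bn) //.
by rewrite HE1 /= cg_eq -natz.
Qed.

Lemma Ec_span (s : seq (nat * int)) :
  Ec b (\sum_(p <- s) iter p.1 (cov Fc b) v *~ p.2) = (c %/ gcdn b c)%:Z * \sum_(p <- s) p.2.
Proof.
rewrite (afsum (mor_B HE bn)) mulr_sumr; apply: eq_bigr => p _.
by rewrite (afMz (mor_B HE bn)) Ec_v mulrzz.
Qed.

Lemma Ec_dvd (y : Fc b) : exists k : int, Ec b y = (c %/ gcdn b c)%:Z * k.
Proof.
have [s ->] := generation Hfree n0 cn y bn.
by exists (\sum_(p <- s) p.2); rewrite Ec_span.
Qed.

Definition Ssum m : Fc b := \sum_(0 <= j < m) iter j.+1 (cov Fc b) v.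

Lemma Ssum_prop m : Ssum m - con Fc b (Ssum m) = iter m (cov Fc b) v - v.
Proof.
elim: m => [|m IH].
  by rewrite /Ssum big_geq // (af0 (m_conB HF bn)) !subrr.
rewrite /Ssum big_nat_recr //= -/(Ssum m) (afD (m_conB HF bn)) (m_concov HF) //.
by rewrite opprD addrACA IH addrC addrA subrK.
Qed.

Lemma factA (y : Fc b) : Ec b y = 0 -> exists z, y = z - con Fc b z.
Proof.
have [s Es] := generation Hfree n0 cn y bn.
rewrite Es Ec_span => /eqP; rewrite mulf_eq0 => /orP [/eqP [] H0|/eqP S0].
  have : (0 < c %/ gcdn b c)%N.
    rewrite divn_gt0 ?(g0 c n0 bn) //.
    by apply: dvdn_leq (c0 n0 cn) (dvdn_gcdr _ _).
  by rewrite H0.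
have E2 : \sum_(p <- s) Ssum p.1 *~ p.2 - con Fc b (\sum_(p <- s) Ssum p.1 *~ p.2)
    = \sum_(p <- s) iter p.1 (cov Fc b) v *~ p.2.
  rewrite (afsum (m_conB HF bn)) -sumrB.
  under eq_bigr do rewrite (afMz (m_conB HF bn)) -mulrzBl Ssum_prop mulrzBl.
  have H0 : \sum_(p <- s) v *~ p.2 = 0.
    rewrite -(afsum (f := fun a : int => v *~ a)) ?S0 ?mulr0z //.
    by move=> a a'; rewrite mulrzBr.
  by rewrite sumrB H0 subr0.
by exists (\sum_(p <- s) Ssum p.1 *~ p.2); rewrite E2.
Qed.
End FactA.

Lemma mor_conM n (M : mackey) : is_Zmodule n M -> is_mor n M M (fun d => con M d).
Proof.
move=> HM; split.
  move=> d dn; split; first exact: (m_conB HM dn).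
  by move=> x; rewrite (m_concov HM) // (m_covcon HM).
move=> d e ed dn; have en := dvdn_trans ed dn; split=> x.
  by rewrite (m_rescon HM).
rewrite -[in LHS](m_covcon HM x dn) (m_trcov HM) //.
by rewrite (m_concov HM).
Qed.

Lemma mor_mulZ n (K : int) : is_mor n Zconst Zconst (fun d (k : Zconst d) => k *~ K).
Proof.
split; first by move=> d dn; split=> [x y|x] //=; rewrite mulrzBl.
move=> d e ed dn; split=> x //=.
by rewrite !mulrzz mulrnAl.
Qed.

Lemma zmod_swap (V : zmodType) (a b a' b' : V) : b - b' = a - a' -> a' - b' = a - b.
Proof.
move=> E; have -> : a' = a - (a - a') by rewrite opprB addrC subrK.
by rewrite -E opprB addrCA [b' + _]addrC addrK.
Qed.

Section Main.
Variables (n : nat) (n_odd : odd n) (b c : nat) (bn : (b %| n)%N) (cn : (c %| n)%N)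
  (Fb : mackey) (gb : Fb b) (Fb_free : is_free n gb)
  (Fc : mackey) (gc : Fc c) (Fc_free : is_free n gc)
  (Db : forall d, Fb d -> Fb d) (Eb : forall d, Fb d -> Zconst d)
  (HSb : sphere_diffs n gb Db Eb)
  (Dc : forall d, Fc d -> Fc d) (Ec : forall d, Fc d -> Zconst d)
  (HSc : sphere_diffs n gc Dc Ec)
  (I : forall d, Zconst d -> Fc d) (HI : is_Ipi n gc I).
Arguments Db : clear implicits.
Arguments Eb : clear implicits.
Arguments Dc : clear implicits.
Arguments Ec : clear implicits.
Arguments I : clear implicits.

Let n0 : (0 < n)%N := odd_gt0 n_odd.
Let HFb := mfree_Z Fb_free.
Let HFc := mfree_Z Fc_free.
Let HZ := Zconst_Z n0.
Local Notation g := (gcdn b c).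
Local Notation q := (c %/ gcdn b c)%N.
Local Notation v := (vv gc b).
Local Notation N := (res Fc b 1 (tr Fc c 1 gc)).

Lemma HDb : is_mor n Fb Fb Db. Proof. by case: HSb. Qed.
Lemma HEb : is_mor n Fb Zconst Eb. Proof. by case: HSb. Qed.
Lemma HDc : is_mor n Fc Fc Dc. Proof. by case: HSc. Qed.
Lemma HEc : is_mor n Fc Zconst Ec. Proof. by case: HSc. Qed.
Lemma HI0 : is_mor n Zconst Fc I. Proof. by case: HI. Qed.
Lemma Eb1 : Eb b gb = 1. Proof. by case: HSb. Qed.
Lemma Ec1 : Ec c gc = 1. Proof. by case: HSc. Qed.
Lemma I1 : I 1%N 1 = tr Fc c 1 gc. Proof. by case: HI. Qed.

Lemma q0 : q != 0%N.
Proof.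
rewrite -lt0n divn_gt0 ?(g0 c n0 bn) //.
by apply: dvdn_leq (c0 n0 cn) (dvdn_gcdr _ _).
Qed.
Lemma qz0 : (q%:Z != 0).
Proof. by have := q0; apply: contra => /eqP [] ->. Qed.

Lemma Dc_eq d y : (d %| n)%N -> Dc d y = y - con Fc d y.
Proof.
move=> dn.
have M2 := mor_sub HFc (mor_id n Fc) (mor_conM HFc).
have E := mfree_uniq Fc_free HFc HDc M2.
rewrite (E _ d dn y) // /msub.
by case: HSc.
Qed.
Lemma Db_eq d y : (d %| n)%N -> Db d y = y - con Fb d y.
Proof.
move=> dn.
have M2 := mor_sub HFb (mor_id n Fb) (mor_conM HFb).
have E := mfree_uniq Fb_free HFb HDb M2.
rewrite (E _ d dn y) // /msub.
by case: HSb.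
Qed.

Lemma Ec_con d y : (d %| n)%N -> Ec d (con Fc d y) = Ec d y.
Proof. by move=> dn; rewrite (mor_con _ HFc HZ n0 HEc dn). Qed.

Lemma Ec_Dc d y : (d %| n)%N -> Ec d (y - con Fc d y) = 0.
Proof. by move=> dn; rewrite (mor_B HEc dn) Ec_con // subrr. Qed.

Lemma I_b : I b 1 = N.
Proof.
have -> : (1 : Zconst b) = res Zconst b 1 1 by [].
by rewrite (mor_res _ HI0) ?dvd1n // I1.
Qed.

Lemma Ec_N : Ec b N = Ec 1%N (tr Fc c 1 gc).
Proof. by rewrite (mor_res _ HEc) ?dvd1n. Qed.

Lemma Ec_angle (m : 'I_g -> int) :
  Ec b (\sum_(i < g) iter i (cov Fc b) v *~ m i) = q%:Z * \sum_(i < g) m i.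
Proof.
rewrite (afsum (mor_B HEc bn)) mulr_sumr; apply: eq_bigr => i _.
by rewrite (afMz (mor_B HEc bn)) (Ec_v n0 cn bn HEc Ec1) mulrzz.
Qed.

Lemma Ec_tr1 : Ec 1%N (tr Fc c 1 gc) = (g * q)%N%:Z.
Proof.
rewrite (mor_tr _ HEc) ?dvd1n // Ec1 /= divn1 -natz.
by rewrite mulnC divnK // dvdn_gcdr.
Qed.


Lemma ML f2 f1 f0 : is_chain_map n Db Eb Dc Ec f2 f1 f0 -> Ec b (f2 b gb) = 0 ->
  null_homotopic n Db Eb Dc Ec f2 f1 f0.
Proof.
case=> H2 H1 H0 C1 C2 E0.
have [y Ey] := factA Fc_free n0 cn bn HEc Ec1 E0.
have [h1 [Hh1 h1b]] := mfree_ex Fb_free y HFc.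
have E2 : meq n f2 (mcomp h1 Db).
  apply: (mfree_uniq Fb_free HFc H2 (mor_comp HDb Hh1)).
  by rewrite /mcomp Db_eq // (mor_B Hh1 bn) (mor_con _ HFb HFc n0 Hh1 bn) h1b -Ey.
set x := f1 b gb - f2 b gb.
have Cx : con Fc b x = x.
  have := C1 b bn gb; rewrite /mcomp Dc_eq // Db_eq // (mor_B H1 bn).
  rewrite (mor_con _ HFb HFc n0 H1 bn) => E.
  by rewrite /x (m_conB HFc bn); apply: zmod_swap.
have [k Kx] := factB Fc_free n0 cn bn Cx.
pose h0 := mscale k I.
have Hh0 : is_mor n Zconst Fc h0 := mor_scale k HFc HI0.
exists h1, h0; split => //.
- apply: (mfree_uniq Fb_free HFc H1 (mor_add HFc (mor_comp Hh1 HDc) (mor_comp HEb Hh0))).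
  rewrite /madd /mcomp /h0 /mscale h1b Eb1 I_b -Kx Dc_eq // -Ey /x.
  by rewrite addrC subrK.
- apply: (zmor_uniq n0 H0 (mor_comp Hh0 HEc)).
  rewrite /mcomp /h0 /mscale (afMz (mor_B HEc (dvd1n n))) I1.
  have := C2 b bn gb; rewrite /mcomp Eb1.
  have -> : (1 : Zconst b) = res Zconst b 1 1 by [].
  rewrite (mor_res _ H0) ?dvd1n //= => <-.
  have -> : f1 b gb = f2 b gb + x by rewrite /x addrC subrK.
  by rewrite (afD (mor_B HEc bn)) E0 add0r Kx (afMz (mor_B HEc bn)) Ec_N.
Qed.

Lemma CM (m : 'I_g -> int) (w : int) (B : forall d, Fb d -> Fc d) :
  is_angle n gb gc m B -> is_chain_map n Db Eb Dc Ec (bracket2 B I Eb w) B (deg0_map m).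
Proof.
case=> HB HBb.
have HIE : is_mor n Fb Fc (mcomp I Eb) := mor_comp HEb HI0.
split.
- exact: (mor_add HFc HB (mor_scale w HFc HIE)).
- exact: HB.
- exact: mor_mulZ.
- move=> d dn x; rewrite /mcomp /bracket2 /madd /mscale Dc_eq // Db_eq //.
  rewrite (mor_B HB dn) (mor_con _ HFb HFc n0 HB dn).
  rewrite (afD (m_conB HFc dn)) (afMz (m_conB HFc dn)) -(mor_con _ HZ HFc n0 HI0 dn) /=.
  by rewrite opprD addrACA subrr addr0.
- apply: (mfree_uniq Fb_free HZ (mor_comp HB HEc) (mor_comp HEb (mor_mulZ _ _))).
  rewrite /mcomp HBb Eb1 /deg0_map Ec_angle.
  by rewrite mulrzz mul1r.
Qed.

Lemma Ec_bracket (m : 'I_g -> int) (w : int) (B : forall d, Fb d -> Fc d) :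
  is_angle n gb gc m B ->
  Ec b (bracket2 B I Eb w gb) = q%:Z * (\sum_(i < g) m i + g%:Z * w).
Proof.
case=> HB HBb.
rewrite /bracket2 /madd /mscale /mcomp (afD (mor_B HEc bn)) HBb Ec_angle.
rewrite (afMz (mor_B HEc bn)) Eb1 I_b Ec_N Ec_tr1 mulrDr mulrzz; congr (_ + _).
by rewrite PoszM -mulrA mulrCA.
Qed.

Lemma Ec_htpy f2 f1 f0 : null_homotopic n Db Eb Dc Ec f2 f1 f0 -> Ec b (f2 b gb) = 0.
Proof.
case=> h1 [h0 [Hh1 _ E2 _ _]].
by rewrite (E2 b bn gb) /mcomp Db_eq // (mor_B Hh1 bn) (mor_con _ HFb HFc n0 Hh1 bn) Ec_Dc.
Qed.

Lemma CMsub f2 f1 f0 f2' f1' f0' :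
  is_chain_map n Db Eb Dc Ec f2 f1 f0 -> is_chain_map n Db Eb Dc Ec f2' f1' f0' ->
  is_chain_map n Db Eb Dc Ec (msub f2 f2') (msub f1 f1') (msub f0 f0').
Proof.
case=> H2 H1 H0 C1 C2 [H2' H1' H0' C1' C2']; split.
- exact: mor_sub HFc H2 H2'.
- exact: mor_sub HFc H1 H1'.
- exact: mor_sub HZ H0 H0'.
- move=> d dn x; rewrite /mcomp /msub (mor_B HDc dn).
  by move: (C1 d dn x) (C1' d dn x); rewrite /mcomp => -> ->.
- move=> d dn x; rewrite /mcomp /msub (mor_B HEc dn).
  by move: (C2 d dn x) (C2' d dn x); rewrite /mcomp => -> ->.
Qed.

Lemma main_result :
  (forall (m : 'I_(gcdn b c) -> int) (w : int) (B : forall d, Fb d -> Fc d),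
     is_angle n gb gc m B ->
     (null_homotopic n Db Eb Dc Ec (bracket2 B I Eb w) B (deg0_map m) <->
      \sum_(i < gcdn b c) m i + (gcdn b c)%:Z * w = 0)) /\
  (exists Phi : (forall d, Fb d -> Fc d) -> (forall d, Fb d -> Fc d) ->
                (forall d, Zconst d -> Zconst d) -> int,
     [/\ (forall (m : 'I_(gcdn b c) -> int) (w : int) (B : forall d, Fb d -> Fc d),
            is_angle n gb gc m B ->
            Phi (bracket2 B I Eb w) B (deg0_map m) =
              \sum_(i < gcdn b c) m i + (gcdn b c)%:Z * w),
         (forall f2 f1 f0 f2' f1' f0',
            is_chain_map n Db Eb Dc Ec f2 f1 f0 ->
            is_chain_map n Db Eb Dc Ec f2' f1' f0' ->
            (Phi f2 f1 f0 = Phi f2' f1' f0' <->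
             homotopic n Db Eb Dc Ec f2 f1 f0 f2' f1' f0')),
         (forall f2 f1 f0 f2' f1' f0',
            is_chain_map n Db Eb Dc Ec f2 f1 f0 ->
            is_chain_map n Db Eb Dc Ec f2' f1' f0' ->
            Phi (madd f2 f2') (madd f1 f1') (madd f0 f0') =
              Phi f2 f1 f0 + Phi f2' f1' f0') &
         (forall k : int, exists f2 f1 f0,
            is_chain_map n Db Eb Dc Ec f2 f1 f0 /\ Phi f2 f1 f0 = k)]).
Proof.
split.
  move=> m w B HB; split.
    move=> /Ec_htpy; rewrite (@Ec_bracket m w B HB) => /eqP.
    by rewrite mulf_eq0 (negbTE qz0) /= => /eqP.
  move=> S; apply: ML; first exact: CM.
  by rewrite (@Ec_bracket m w B HB) S mulr0.
pose Phi := fun (f2 f1 : forall d, Fb d -> Fc d) (f0 : forall d, Zconst d -> Zconst d) =>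
  (Ec b (f2 b gb) %/ q%:Z)%Z.
have Hdv := Ec_dvd Fc_free n0 cn bn HEc Ec1.
exists Phi; split.
- by move=> m w B HB; rewrite /Phi (@Ec_bracket m w B HB) mulKz // qz0.
- move=> f2 f1 f0 f2' f1' f0' C C'.
  have [k Ek] := Hdv (f2 b gb); have [k' Ek'] := Hdv (f2' b gb).
  rewrite /Phi Ek Ek' !mulKz ?qz0 //; split.
    move=> kk; apply: ML; first exact: CMsub.
    by rewrite /msub (mor_B HEc bn) Ek Ek' kk subrr.
  move=> /Ec_htpy; rewrite /msub (mor_B HEc bn) Ek Ek' => /eqP.
  by rewrite -mulrBr mulf_eq0 (negbTE qz0) subr_eq0 => /eqP.
- move=> f2 f1 f0 f2' f1' f0' C C'.
  have [k Ek] := Hdv (f2 b gb); have [k' Ek'] := Hdv (f2' b gb).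
  by rewrite /Phi /madd (afD (mor_B HEc bn)) Ek Ek' -mulrDr !mulKz ?qz0.
- move=> k.
  have G0 := g0 c n0 bn.
  pose m := fun i : 'I_(gcdn b c) => if (nat_of_ord i == 0)%N then k else 0.
  have [B [HB HBb]] := mfree_ex Fb_free (\sum_(i < gcdn b c) iter i (cov Fc b) v *~ m i) HFc.
  have HA : is_angle n gb gc m B by split.
  exists (bracket2 B I Eb 0), B, (deg0_map m); split; first exact: CM.
  rewrite /Phi (@Ec_bracket m 0 B HA) mulKz ?qz0 // mulr0 addr0.
  rewrite (bigD1 (Ordinal G0)) //= /m eqxx big1 ?addr0 //.
  move=> i Hi; case: eqP => // E; move: Hi.
  by rewrite -val_eqE /= E eqxx.
Qed.

End Main.

Theorem proposition3p4
  (n : nat) (n_odd : odd n) (b c : nat) (bn : (b %| n)%N) (cn : (c %| n)%N)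
  (Fb : mackey) (gb : Fb b) (Fb_free : is_free n gb)
  (Fc : mackey) (gc : Fc c) (Fc_free : is_free n gc)
  (Db : forall d, Fb d -> Fb d) (Eb : forall d, Fb d -> Zconst d)
  (HSb : sphere_diffs n gb Db Eb)
  (Dc : forall d, Fc d -> Fc d) (Ec : forall d, Fc d -> Zconst d)
  (HSc : sphere_diffs n gc Dc Ec)
  (I : forall d, Zconst d -> Fc d) (HI : is_Ipi n gc I) :
  (* [m,w] is null-homotopic iff sum_i m_i + (b,c) w = 0 *)
  (forall (m : 'I_(gcdn b c) -> int) (w : int) (B : forall d, Fb d -> Fc d),
     is_angle n gb gc m B ->
     (null_homotopic n Db Eb Dc Ec (bracket2 B I Eb w) B (deg0_map m) <->
      \sum_(i < gcdn b c) m i + (gcdn b c)%:Z * w = 0)) /\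
  (* the rule [m,w] |-> sum_i m_i + (b,c) w is a well-defined group
     isomorphism [S^{lambda_b}, S^{lambda_c}] -> Z *)
  (exists Phi : (forall d, Fb d -> Fc d) -> (forall d, Fb d -> Fc d) ->
                (forall d, Zconst d -> Zconst d) -> int,
     [/\ (forall (m : 'I_(gcdn b c) -> int) (w : int) (B : forall d, Fb d -> Fc d),
            is_angle n gb gc m B ->
            Phi (bracket2 B I Eb w) B (deg0_map m) =
              \sum_(i < gcdn b c) m i + (gcdn b c)%:Z * w),
         (forall f2 f1 f0 f2' f1' f0',
            is_chain_map n Db Eb Dc Ec f2 f1 f0 ->
            is_chain_map n Db Eb Dc Ec f2' f1' f0' ->
            (Phi f2 f1 f0 = Phi f2' f1' f0' <->
             homotopic n Db Eb Dc Ec f2 f1 f0 f2' f1' f0')),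
         (forall f2 f1 f0 f2' f1' f0',
            is_chain_map n Db Eb Dc Ec f2 f1 f0 ->
            is_chain_map n Db Eb Dc Ec f2' f1' f0' ->
            Phi (madd f2 f2') (madd f1 f1') (madd f0 f0') =
              Phi f2 f1 f0 + Phi f2' f1' f0') &
         (forall k : int, exists f2 f1 f0,
            is_chain_map n Db Eb Dc Ec f2 f1 f0 /\ Phi f2 f1 f0 = k)]).
Proof. by apply: main_result. Qed.
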